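(* Let $Y$ be a topological space, $\mathcal X=(X_i)_{i\in I_Y}$ a family of nonempty spaces, and let $\widetilde Y$ be a space containing $Y$ as a dense subspace and, for each $i\in I_Y$, $\widetilde X_i$ a space containing $X_i$ as a subspace; put $\widetilde{\mathcal X}=(\widetilde X_i)_{i\in I_Y}$ (note $I_Y=I_{\widetilde Y}$). Then $Z(Y,\mathcal X)$ is a subspace of $Z(\widetilde Y,\widetilde{\mathcal X})$ and \[ \mathrm{Compl}\big(Z(Y,\mathcal X),Z(\widetilde Y,\widetilde{\mathcal X})\big)=\max\Big\{\mathrm{Compl}(Y,\widetilde Y),\ \sup_{i\in I_Y}\mathrm{Compl}(X_i,\widetilde X_i)\Big\}, \] whenever at least one of the two sides is defined (in which case both are).
   Context: All spaces are Tychonoff. For a space $Y$, $I_Y$ denotes its set of isolated points and $Y'=Y\setminus I_Y$. Zoom space: for a space $Y$ and a family $\mathcal X=(X_i)_{i\in I_Y}$ of nonempty pairwise disjoint spaces (disjoint from $Y'$), $Z(Y,\mathcal X)$ is the set $Y'\cup\bigcup_{i\in I_Y}X_i$ with the topology whose basis consists of all open subsets of the $X_i$, $i\in I_Y$, and all sets $V_U=(U\setminus I_Y)\cup\bigcup\{X_i: i\in U\cap I_Y\}$ for $U$ open in $Y$. $\mathcal F$-Borel hierarchy: $\mathcal F_0(Y)$ closed sets; for $0<\alpha<\omega_1$, $\mathcal F_\alpha(Y)$ is the family of countable unions (if $\alpha$ odd) or countable intersections (if $\alpha$ even) of members of $\bigcup_{\beta<\alpha}\mathcal F_\beta(Y)$,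 where $\lambda+m$ ($\lambda$ limit or 0, $m\in\omega$) has the parity of $m$; $\mathcal F_{\omega_1}(Y)$ is the family of Suslin-$\mathcal F$ sets $\bigcup_{\sigma\in\omega^\omega}\bigcap_k F_{\sigma(0),\dots,\sigma(k)}$ ($F_{\dots}$ closed). For $A\subset B$, $\mathrm{Compl}(A,B)$ is the least $\alpha\le\omega_1$ with $A\in\mathcal F_\alpha(B)$ (defined iff $A\in\mathcal F_{\omega_1}(B)$). *)

(* Defs.v *)
From Stdlib Require Import Reals List.
Open Scope R_scope.
Unset Implicit Arguments.

Definition set (T : Type) := T -> Prop.
Definition subset {T} (A B : set T) := forall x, A x -> B x.

Definition is_topology {T} (S : set T) (O : set (set T)) : Prop :=
  (forall U, O U -> subset U S) /\
  O S /\ O (fun _ => False) /\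
  (forall F : set (set T), (forall U, F U -> O U) ->
      O (fun x => exists U, F U /\ U x)) /\
  (forall U V, O U -> O V -> O (fun x => U x /\ V x)).

Definition sub_top {T} (O : set (set T)) (A : set T) : set (set T) :=
  fun V => exists U, O U /\ forall x, V x <-> (A x /\ U x).

Definition closed_in {T} (S : set T) (O : set (set T)) (F : set T) : Prop :=
  subset F S /\ O (fun x => S x /\ ~ F x).

Definition dense_in {T} (S : set T) (O : set (set T)) (A : set T) : Prop :=
  subset A S /\ forall U, O U -> (exists x, U x) -> exists x, U x /\ A x.

Definition isolated {T} (S : set T) (O : set (set T)) (y : T) : Prop :=
  S y /\ O (fun z => z = y).

Definition continuous_R {T} (S : set T) (O : set (set T)) (f : T -> R) : Prop :=
  forall x, S x -> forall eps, eps > 0 ->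
    exists U, O U /\ U x /\ forall y, U y -> Rabs (f y - f x) < eps.

Definition tychonoff {T} (S : set T) (O : set (set T)) : Prop :=
  is_topology S O /\
  (forall x, S x -> closed_in S O (fun z => z = x)) /\
  (forall F x, closed_in S O F -> S x -> ~ F x ->
     exists f : T -> R, continuous_R S O f /\
       (forall y, S y -> 0 <= f y <= 1) /\ f x = 0 /\ (forall y, F y -> f y = 1)).

(* Countable ordinals: well-orders on subsets of nat, compared by the  *)
(* existence of strictly increasing maps.  omega_1 is added on top.     *)
Record cord := {
  cdom : set nat;
  clt : nat -> nat -> Prop;
  clt_irrefl : forall x, ~ clt x x;
  clt_trans : forall x y z, clt x y -> clt y z -> clt x z;
  clt_total : forall x y, cdom x -> cdom y -> x = y \/ clt x y \/ clt y x;
  clt_wf : forall P : set nat, (exists x, cdom x /\ P x) ->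
     exists m, cdom m /\ P m /\ forall y, cdom y -> P y -> ~ clt y m
}.

Definition ole (a b : cord) : Prop :=
  exists f : nat -> nat,
    (forall x, cdom a x -> cdom b (f x)) /\
    (forall x y, cdom a x -> cdom a y -> clt a x y -> clt b (f x) (f y)).
Definition olt (a b : cord) : Prop := ole a b /\ ~ ole b a.

Definition ozero (a : cord) : Prop := forall x, ~ cdom a x.
Definition osucc (b a : cord) : Prop :=
  olt b a /\ forall c, olt b c -> ole a c.

(* parity: lambda + m has the parity of m *)
Inductive oeven : cord -> Prop :=
| oeven_lim : forall a, (forall b, ~ osucc b a) -> oeven a
| oeven_succ : forall a b, osucc b a -> oodd b -> oeven a
with oodd : cord -> Prop :=
| oodd_succ : forall a b, osucc b a -> oeven b -> oodd a.

(* ordinals <= omega_1 : Some a = countable ordinal a, None = omega_1 *)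
Definition ordw1 := option cord.
Definition ole1 (a b : ordw1) : Prop :=
  match a, b with
  | Some a', Some b' => ole a' b'
  | _, None => True
  | None, Some _ => False
  end.

Inductive Fclass {T} (S : set T) (O : set (set T)) : cord -> set T -> Prop :=
| Fclass0 : forall a A, ozero a -> closed_in S O A -> Fclass S O a A
| Fclass_odd : forall a A (An : nat -> set T), oodd a ->
    (forall n, exists b, olt b a /\ Fclass S O b (An n)) ->
    (forall x, A x <-> exists n, An n x) -> Fclass S O a A
| Fclass_even : forall a A (An : nat -> set T), ~ ozero a -> oeven a ->
    (forall n, exists b, olt b a /\ Fclass S O b (An n)) ->
    (forall x, A x <-> forall n, An n x) -> Fclass S O a A.

Definition suslinF {T} (S : set T) (O : set (set T)) (A : set T) : Prop :=
  exists F : list nat -> set T,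
    (forall s, s <> nil -> closed_in S O (F s)) /\
    forall x, A x <-> exists sigma : nat -> nat,
      forall k, F (map sigma (seq 0 (Nat.succ k))) x.

Definition Fw {T} (S : set T) (O : set (set T)) (a : ordw1) (A : set T) : Prop :=
  match a with
  | Some a' => Fclass S O a' A
  | None => suslinF S O A
  end.

Definition is_compl {T} (S : set T) (O : set (set T)) (A : set T) (c : ordw1) : Prop :=
  Fw S O c A /\ forall d, Fw S O d A -> ole1 c d.
Definition compl_defined {T} (S : set T) (O : set (set T)) (A : set T) : Prop :=
  Fw S O None A.

(* Zoom spaces.  For a space (S,O) on TY and spaces (SX i, OX i) on     *)
(* TX i, Z((S,O),(SX i,OX i)_i) lives on the tagged union below: inl y  *)
(* for y in S', inr (i,x) for i isolated and x in X_i.                  *)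
Definition zoomT (TY : Type) (TX : TY -> Type) : Type := (TY + {i : TY & TX i})%type.

Section Zoom.
Context {TY : Type} {TX : TY -> Type}.
Variables (S : set TY) (O : set (set TY))
          (SX : forall i, set (TX i)) (OX : forall i, set (set (TX i))).

Definition zoom_carrier : set (zoomT TY TX) := fun z =>
  match z with
  | inl y => S y /\ ~ isolated S O y
  | inr s => isolated S O (projT1 s) /\ SX (projT1 s) (projT2 s)
  end.

Definition zoom_V (U : set TY) : set (zoomT TY TX) := fun z =>
  match z with
  | inl y => U y /\ ~ isolated S O y
  | inr s => U (projT1 s) /\ isolated S O (projT1 s) /\ SX (projT1 s) (projT2 s)
  end.

Definition zoom_basis : set (set (zoomT TY TX)) := fun B =>
  (exists i (U : set (TX i)), isolated S O i /\ OX i U /\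
      forall z, B z <-> exists x, U x /\ z = inr (existT _ i x))
  \/ (exists U, O U /\ forall z, B z <-> zoom_V U z).

Definition zoom_open : set (set (zoomT TY TX)) := fun W =>
  subset W zoom_carrier /\
  forall z, W z -> exists B, zoom_basis B /\ B z /\ subset B W.
End Zoom.

(* Main.v *)
Require Import Defs.
From Stdlib Require Import Reals List.
From Stdlib Require Import Classical ClassicalEpsilon FunctionalExtensionality PropExtensionality.
From Stdlib Require Cantor Eqdep.
Local Open Scope nat_scope.


Lemma set_ext {T} (A B : set T) : (forall x, A x <-> B x) -> A = B.
Proof. intro H; apply functional_extensionality; intro x; apply propositional_extensionality; auto. Qed.

Definition ocut (a : cord) (y : nat) : cord.
Proof.
  refine {| cdom := fun v => cdom a v /\ clt a v y; clt := clt a |}.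
  - apply clt_irrefl.
  - apply clt_trans.
  - intros x z [Hx _] [Hz _]; apply clt_total; auto.
  - intros P [x [[Hx Hxy] HP]].
    destruct (clt_wf a (fun v => clt a v y /\ P v)) as [m [Hm [[Hmy HPm] Hmin]]].
    + exists x; auto.
    + exists m; split; [auto|split; auto].
      intros z [Hz Hzy] HPz; apply Hmin; auto.
Defined.

Definition ozc : cord.
Proof.
  refine {| cdom := fun _ => False; clt := lt |}.
  - intros x H; exact (Nat.lt_irrefl x H).
  - intros; eapply Nat.lt_trans; eauto.
  - intros x y [].
  - intros P [x [[] _]].
Defined.

Lemma ole_refl a : ole a a.
Proof. exists (fun x => x); split; auto. Qed.

Lemma ole_trans a b c : ole a b -> ole b c -> ole a c.
Proof.
  intros [f [Hf1 Hf2]] [g [Hg1 Hg2]]; exists (fun x => g (f x)); split; auto.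
Qed.

Lemma ocut_le a y : ole (ocut a y) a.
Proof. exists (fun x => x); split; simpl; intuition. Qed.

Lemma ozero_ole a b : ozero a -> ole a b.
Proof. intro H; exists (fun x => x); split; intros; exfalso; eapply H; eauto. Qed.

Lemma ozc_zero : ozero ozc.
Proof. intros x H; exact H. Qed.

Lemma no_descend a h :
  (forall x, cdom a x -> cdom a (h x)) ->
  (forall x y, cdom a x -> cdom a y -> clt a x y -> clt a (h x) (h y)) ->
  forall x, cdom a x -> ~ clt a (h x) x.
Proof.
  intros H1 H2 x Hx Hc.
  destruct (clt_wf a (fun v => clt a (h v) v)) as [m [Hm [Hm2 Hm3]]].
  - exists x; auto.
  - apply (Hm3 (h m)); auto.
Qed.

Lemma ocut_not_ge a y : cdom a y -> ~ ole a (ocut a y).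
Proof.
  intros Hy [h [H1 H2]].
  apply (no_descend a h) with y; auto.
  - intros x Hx; apply (H1 x Hx).
  - apply (H1 y Hy).
Qed.

Lemma ocut_olt a y : cdom a y -> olt (ocut a y) a.
Proof. intro Hy; split; [apply ocut_le| apply ocut_not_ge; auto]. Qed.

Lemma min_ex (c : cord) (P : nat -> Prop) :
  (exists z, cdom c z /\ P z) ->
  {m | cdom c m /\ P m /\ forall z, cdom c z -> P z -> ~ clt c z m}.
Proof. intro H; apply constructive_indefinite_description; apply clt_wf; auto. Qed.

Definition least (c : cord) (P : nat -> Prop) : nat :=
  match excluded_middle_informative (exists z, cdom c z /\ P z) with
  | left H => proj1_sig (min_ex c P H)
  | right _ => 0
  end.

Lemma least_spec c P : (exists z, cdom c z /\ P z) ->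
  cdom c (least c P) /\ P (least c P) /\
  forall z, cdom c z -> P z -> ~ clt c z (least c P).
Proof.
  intro H; unfold least; destruct excluded_middle_informative as [H'|H'].
  - destruct (min_ex c P H') as [m Hm]; simpl; auto.
  - contradiction.
Qed.

Section Cmp.
Variables a c : cord.
Definition Gr y z := ole (ocut a y) (ocut c z).
Definition gf y := least c (Gr y).

Lemma gf_strict w w' : cdom a w -> cdom a w' -> clt a w w' ->
  (exists z, cdom c z /\ Gr w' z) -> clt c (gf w) (gf w').
Proof.
  intros Hw Hw' Hlt Hex.
  destruct (least_spec c (Gr w') Hex) as [Hd' [[h [H1 H2]] _]].
  fold (gf w') in *.
  destruct (H1 w) as [Hhw Hhwlt]. { simpl; auto. }
  assert (HG : Gr w (h w)).
  { exists h; split.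
    - intros v [Hv Hvw]. simpl.
      assert (Hvw' : cdom (ocut a w') v) by (simpl; split; auto; eapply clt_trans; eauto).
      split.
      + exact (proj1 (H1 v Hvw')).
      + apply H2; simpl; auto.
    - intros v v' [Hv Hvw] [Hv' Hvw'] Hvv'. simpl in Hvv'.
      assert (Hw1 : cdom (ocut a w') v) by (simpl; split; auto; eapply clt_trans; [exact Hvw|exact Hlt]).
      assert (Hw2 : cdom (ocut a w') v') by (simpl; split; auto; eapply clt_trans; [exact Hvw'|exact Hlt]).
      exact (H2 v v' Hw1 Hw2 Hvv'). }
  destruct (least_spec c (Gr w)) as [Hd [_ Hmin]]. { exists (h w); auto. }
  fold (gf w) in *.
  destruct (clt_total c (gf w) (h w) Hd Hhw) as [E|[E|E]].
  - rewrite E; auto.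
  - eapply clt_trans; eauto.
  - exfalso; exact (Hmin (h w) Hhw HG E).
Qed.

Lemma ord_cmp : (exists y, cdom a y /\ ole c (ocut a y)) \/ ole a c.
Proof.
  destruct (classic (exists y, cdom a y /\ ole c (ocut a y))) as [H|H]; [left; auto|right].
  assert (Hall : forall y, cdom a y -> exists z, cdom c z /\ Gr y z).
  { apply NNPP; intro Hn.
    destruct (clt_wf a (fun y => ~ exists z, cdom c z /\ Gr y z)) as [y0 [Hy0 [Hn0 Hmin]]].
    { apply NNPP; intro Hn'; apply Hn; intros y Hy; apply NNPP; intro Hc; apply Hn'; eauto. }
    assert (IH : forall w, cdom a w -> clt a w y0 -> exists z, cdom c z /\ Gr w z).
    { intros w Hw Hlt; apply NNPP; intro Hc; exact (Hmin w Hw Hc Hlt). }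
    destruct (classic (exists z0, cdom c z0 /\ forall w, cdom a w -> clt a w y0 -> clt c (gf w) z0))
      as [[z0 [Hz0 Hb]] | Hnb].
    - apply Hn0; exists z0; split; auto. exists gf; split.
      + intros v [Hv Hvy]; simpl; split; auto.
        destruct (least_spec c (Gr v) (IH v Hv Hvy)) as [Hd _]; auto.
      + intros v v' [Hv Hvy] [Hv' Hvy'] Hlt; simpl. apply gf_strict; auto.
    - apply H; exists y0; split; auto.
      assert (Hk : forall z, cdom c z -> exists w, cdom (ocut a y0) w /\ ~ clt c (gf w) z).
      { intros z Hz; apply NNPP; intro Hc; apply Hnb; exists z; split; auto.
        intros w Hw Hwy; apply NNPP; intro Hc2; apply Hc; exists w; split; simpl; auto. }
      exists (fun z => least (ocut a y0) (fun w => ~ clt c (gf w) z)); split.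
      + intros z Hz; destruct (least_spec _ _ (Hk z Hz)) as [Hd _]; auto.
      + intros z z' Hz Hz' Hzz'.
        destruct (least_spec _ _ (Hk z Hz)) as [[Hw Hwy] [Hpw Hmw]].
        destruct (least_spec _ _ (Hk z' Hz')) as [[Hw' Hwy'] [Hpw' Hmw']].
        set (w := least (ocut a y0) (fun w => ~ clt c (gf w) z)) in *.
        set (w' := least (ocut a y0) (fun w => ~ clt c (gf w) z')) in *.
        simpl.
        destruct (clt_total a w w' Hw Hw') as [E|[E|E]]; auto.
        * exfalso. rewrite <- E in Hpw'.
          assert (HG : Gr w z).
          { exists gf; split.
            - intros v [Hv Hvw]; simpl. split.
              + destruct (least_spec c (Gr v)) as [Hd _]; auto.
                apply IH; auto; eapply clt_trans; eauto.
              + apply NNPP; intro Hc. apply (Hmw v); simpl; auto.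
                split; auto; eapply clt_trans; eauto.
            - intros v v' [Hv Hvw] [Hv' Hvw'] Hlt; simpl; apply gf_strict; auto.
              apply IH; auto; eapply clt_trans; eauto. }
          destruct (least_spec c (Gr w)) as [Hdw [_ Hminw]]. { exists z; auto. }
          fold (gf w) in *.
          destruct (clt_total c (gf w) z' Hdw Hz') as [E2|[E2|E2]].
          -- apply (Hminw z Hz HG); rewrite E2; auto.
          -- contradiction.
          -- apply (Hminw z Hz HG); eapply clt_trans; eauto.
        * exfalso. apply (Hmw w'); simpl; auto.
          intro Hc; apply Hpw'; eapply clt_trans; eauto. }
  exists gf; split.
  - intros y Hy; destruct (least_spec c (Gr y) (Hall y Hy)) as [Hd _]; auto.
  - intros y y' Hy Hy' Hlt; apply gf_strict; auto.
Qed.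
End Cmp.

Lemma ole_total a c : ole c a \/ ole a c.
Proof.
  destruct (ord_cmp a c) as [[y [_ H]]|H]; auto.
  left; eapply ole_trans; eauto; apply ocut_le.
Qed.

Lemma olt_cut c a : olt c a -> exists y, cdom a y /\ ole c (ocut a y).
Proof.
  intros [H1 H2]; destruct (ord_cmp a c) as [H|H]; auto; contradiction.
Qed.

Lemma olt_ole_trans a b c : olt a b -> ole b c -> olt a c.
Proof.
  intros [H1 H2] H3; split; [eapply ole_trans; eauto|].
  intro H4; apply H2; eapply ole_trans; eauto.
Qed.

Lemma ole_olt_trans a b c : ole a b -> olt b c -> olt a c.
Proof.
  intros H1 [H2 H3]; split; [eapply ole_trans; eauto|].
  intro H4; apply H3; eapply ole_trans; eauto.
Qed.

Lemma olt_wf : well_founded olt.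
Proof.
  assert (Hcut : forall a y, cdom a y -> forall c, ole c (ocut a y) -> Acc olt c).
  { intros a. apply NNPP; intro Hn.
    destruct (clt_wf a (fun y => ~ forall c, ole c (ocut a y) -> Acc olt c)) as [y0 [Hy0 [Hn0 Hmin]]].
    { apply NNPP; intro Hn'; apply Hn; intros y Hy; apply NNPP; intro Hc; apply Hn'; eauto. }
    apply Hn0; intros c Hc; constructor; intros c' Hc'.
    destruct (olt_cut c' (ocut a y0) (olt_ole_trans _ _ _ Hc' Hc)) as [w [[Hw Hwy] Hle]].
    apply NNPP; intro Hacc.
    apply (Hmin w Hw); auto.
    - intro HH; apply Hacc; apply HH.
      eapply ole_trans; [exact Hle|].
      exists (fun x => x); split; simpl; intuition. }
  intro a; constructor; intros c Hc.
  destruct (olt_cut c a Hc) as [y [Hy Hle]]; eapply Hcut; eauto.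
Qed.

Definition oeq a b := ole a b /\ ole b a.

Lemma osucc_le b a c : osucc b a -> olt c a -> ole c b.
Proof.
  intros [Hba Hs] Hca.
  destruct (classic (ole c b)) as [H|H]; auto.
  destruct (ole_total b c) as [H'|H']; [contradiction|].
  exfalso. destruct Hca as [_ Hn]. apply Hn. apply Hs. split; auto.
Qed.

Lemma osucc_iso_r b a a' : osucc b a -> oeq a a' -> osucc b a'.
Proof.
  intros [Hba Hs] [H1 H2]; split.
  - eapply olt_ole_trans; eauto.
  - intros c Hc; eapply ole_trans; eauto.
Qed.

Lemma osucc_iso_l b b' a : osucc b a -> oeq b b' -> osucc b' a.
Proof.
  intros [Hba Hs] [H1 H2]; split.
  - eapply ole_olt_trans; eauto.
  - intros c Hc; apply Hs; eapply ole_olt_trans; eauto.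
Qed.

Lemma oeven_iso a a' : oeven a -> oeq a a' -> oeven a'.
Proof.
  intros H He; destruct H as [a Hl| a b Hs Ho].
  - apply oeven_lim; intros b Hb; apply (Hl b).
    apply osucc_iso_r with a'; auto; destruct He; split; auto.
  - eapply oeven_succ; [|exact Ho]. eapply osucc_iso_r; eauto.
Qed.

Lemma oodd_iso a a' : oodd a -> oeq a a' -> oodd a'.
Proof.
  intros H He; destruct H as [a b Hs Ho].
  eapply oodd_succ; [|exact Ho]. eapply osucc_iso_r; eauto.
Qed.

Lemma osucc_nz b a : osucc b a -> ~ ozero a.
Proof. intros [[_ H] _] Hz; apply H; apply ozero_ole; auto. Qed.

Lemma oodd_nz a : oodd a -> ~ ozero a.
Proof. intros H; destruct H as [a b Hs _]; eapply osucc_nz; eauto. Qed.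

Lemma parity_excl : forall a, oeven a -> oodd a -> False.
Proof.
  intro a; induction (olt_wf a) as [a _ IH]; intros He Ho.
  destruct Ho as [a b Hs Hb].
  destruct He as [a Hl| a b' Hs' Hb'].
  - exact (Hl b Hs).
  - assert (E : oeq b' b).
    { split; eapply osucc_le; eauto; destruct Hs, Hs'; auto. }
    apply (IH b); auto.
    + destruct Hs; auto.
    + eapply oodd_iso; eauto.
Qed.

Lemma parity_tot : forall a, oeven a \/ oodd a.
Proof.
  intro a; induction (olt_wf a) as [a _ IH].
  destruct (classic (exists b, osucc b a)) as [[b Hb]|Hn].
  - destruct (IH b) as [H|H]; [destruct Hb; auto| right; eapply oodd_succ; eauto | left; eapply oeven_succ; eauto].
  - left; apply oeven_lim; intros b Hb; apply Hn; eauto.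
Qed.

Section FC.
Context {T : Type} (S : set T) (O : set (set T)).

Lemma Fclass_ext a A A' : Fclass S O a A -> (forall x, A x <-> A' x) -> Fclass S O a A'.
Proof. intros H E; rewrite <- (set_ext _ _ E); auto. Qed.

Lemma Fclass_iso a a' A : Fclass S O a A -> oeq a a' -> Fclass S O a' A.
Proof.
  intros H [H1 H2]; destruct H as [a A Hz Hc | a A An Ho Hn E | a A An Hnz He Hn E].
  - apply Fclass0; auto. intros x Hx. destruct H2 as [f [Hf _]]. exact (Hz _ (Hf x Hx)).
  - apply Fclass_odd with (An := An); [exact (oodd_iso a a' Ho (conj H1 H2)) | | exact E].
    intro n; destruct (Hn n) as [b [Hb Hf]]; exists b; split; auto; eapply olt_ole_trans; eauto.
  - apply Fclass_even with (An := An); [ | exact (oeven_iso a a' He (conj H1 H2)) | | exact E].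
    + intro Hz; apply Hnz; intros x Hx; destruct H1 as [f [Hf _]]; exact (Hz _ (Hf x Hx)).
    + intro n; destruct (Hn n) as [b [Hb Hf]]; exists b; split; auto; eapply olt_ole_trans; eauto.
Qed.

Lemma Fclass_mono a b A : Fclass S O a A -> ole a b -> Fclass S O b A.
Proof.
  intros H Hab.
  destruct (classic (ole b a)) as [Hba|Hba].
  - eapply Fclass_iso; eauto; split; auto.
  - destruct (parity_tot b) as [He|Ho].
    + eapply Fclass_even with (An := fun _ => A); auto.
      * intro Hz; apply Hba; apply ozero_ole; auto.
      * intro n; exists a; split; auto; split; auto.
      * intro x; split; auto. intro Hx; exact (Hx 0).
    + eapply Fclass_odd with (An := fun _ => A); auto.
      * intro n; exists a; split; auto; split; auto.
      * intro x; split; [intro Hx; exists 0; exact Hx | intros [_ Hx]; exact Hx].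
Qed.

Lemma Fclass_closed b A : closed_in S O A -> Fclass S O b A.
Proof.
  intro H; apply Fclass_mono with ozc; [apply Fclass0; auto; apply ozc_zero| apply ozero_ole, ozc_zero].
Qed.

Lemma dec_zero a C : ozero a -> Fclass S O a C -> closed_in S O C.
Proof.
  intros Hz H; destruct H as [a A _ Hc | a A An Ho Hn E | a A An Hnz He Hn E]; auto.
  - exfalso; eapply oodd_nz; eauto.
  - contradiction.
Qed.

Lemma dec_odd a b C : osucc b a -> oeven b -> Fclass S O a C ->
  exists Cn : nat -> set T, (forall n, Fclass S O b (Cn n)) /\ forall x, C x <-> exists n, Cn n x.
Proof.
  intros Hs Hb H; destruct H as [a A Hz Hc | a A An Ho Hn E | a A An Hnz He Hn E].
  - exfalso; eapply osucc_nz; eauto.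
  - exists An; split; auto. intro n; destruct (Hn n) as [b' [Hb' Hf]].
    eapply Fclass_mono; eauto. eapply osucc_le; eauto.
  - exfalso; apply (parity_excl a); auto. eapply oodd_succ; eauto.
Qed.

Lemma dec_even a C : oeven a -> ~ ozero a -> Fclass S O a C ->
  exists Cn : nat -> set T, (forall n, exists b, olt b a /\ Fclass S O b (Cn n)) /\ forall x, C x <-> forall n, Cn n x.
Proof.
  intros He Hnz H; destruct H as [a A Hz Hc | a A An Ho Hn E | a A An Hnz' He' Hn E].
  - contradiction.
  - exfalso; apply (parity_excl a); auto.
  - exists An; split; auto.
Qed.

Lemma open_local (P : set T) : is_topology S O -> subset P S ->
  (forall x, P x -> exists U, O U /\ U x /\ subset U P) -> O P.
Proof.
  intros [_ [_ [_ [Hu _]]]] HPS H.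
  assert (E : P = fun x => exists U, (fun U => O U /\ subset U P) U /\ U x).
  { apply set_ext; intro x; split.
    - intro Hx; destruct (H x Hx) as [U [HU [Hux Hs]]]; exists U; auto.
    - intros [U [[_ Hs] Hux]]; auto. }
  rewrite E; apply Hu; intros U [HU _]; auto.
Qed.

Lemma open_empty : is_topology S O -> O (fun _ => False).
Proof. intros [_ [_ [H _]]]; auto. Qed.

Lemma closed_full : is_topology S O -> closed_in S O S.
Proof.
  intro Ht; split; [intros x; auto|].
  replace (fun x => S x /\ ~ S x) with (fun _ : T => False); [apply open_empty; auto|].
  apply set_ext; intuition.
Qed.
End FC.

Section Pre.
Context {T T' : Type} (S : set T) (O : set (set T)) (S' : set T') (O' : set (set T'))
  (f : T' -> T) (Hmap : forall x, S' x -> S (f x))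
  (Hcont : forall U, O U -> O' (fun x => S' x /\ U (f x))).

Definition preim (A : set T) : set T' := fun x => S' x /\ A (f x).

Lemma pre_closed A : closed_in S O A -> closed_in S' O' (preim A).
Proof.
  intros [Hs Ho]; split; [intros x [Hx _]; auto|].
  replace (fun x => S' x /\ ~ preim A x) with (fun x => S' x /\ (fun t => S t /\ ~ A t) (f x)); [apply (Hcont (fun t => S t /\ ~ A t)); auto|].
  apply set_ext; intro x; unfold preim; split.
  - intros [Hx [_ Hn]]; split; auto; intros [_ Ha]; auto.
  - intros [Hx Hn]; split; auto; split; auto.
Qed.

Lemma Fclass_pre : forall a A, Fclass S O a A -> Fclass S' O' a (preim A).
Proof.
  intro a; induction (olt_wf a) as [a _ IH]; intros A H.
  destruct H as [a A Hz Hc | a A An Ho Hn E | a A An Hnz He Hn E].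
  - apply Fclass0; auto; apply pre_closed; auto.
  - apply Fclass_odd with (An := fun n => preim (An n)); auto.
    + intro n; destruct (Hn n) as [b [Hb Hf]]; exists b; split; auto.
    + intro x; unfold preim; rewrite E; split.
      * intros [Hx [n Hn']]; eauto.
      * intros [n [Hx Hn']]; eauto.
  - apply Fclass_even with (An := fun n => preim (An n)); auto.
    + intro n; destruct (Hn n) as [b [Hb Hf]]; exists b; split; auto.
    + intro x; unfold preim; rewrite E; split.
      * intros [Hx Hn'] n; auto.
      * intros Hn'; split; [exact (proj1 (Hn' 0))|]; intro n; exact (proj2 (Hn' n)).
Qed.

Lemma suslin_pre A : suslinF S O A -> suslinF S' O' (preim A).
Proof.
  intros [F [Hc E]]; exists (fun s => preim (F s)); split.
  - intros s Hs; apply pre_closed; auto.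
  - intro x; unfold preim; rewrite E; split.
    + intros [Hx [sg Hsg]]; exists sg; auto.
    + intros [sg Hsg]; split; [exact (proj1 (Hsg 0))|]; exists sg; intro k; exact (proj2 (Hsg k)).
Qed.

Lemma Fw_pre a A : Fw S O a A -> Fw S' O' a (preim A).
Proof. destruct a; simpl; [apply Fclass_pre| apply suslin_pre]. Qed.
End Pre.

Lemma dchoice {I : Type} {B : I -> Type} (P : forall i, B i -> Prop) :
  (forall i, exists b, P i b) -> exists f : forall i, B i, forall i, P i (f i).
Proof.
  intro H; exists (fun i => proj1_sig (constructive_indefinite_description _ (H i))).
  intro i; exact (proj2_sig (constructive_indefinite_description _ (H i))).
Qed.

Definition p1 n := fst (Cantor.of_nat n).
Definition p2 n := snd (Cantor.of_nat n).
Lemma map_p1 (s1 s2 : nat -> nat) l : map p1 (map (fun n => Cantor.to_nat (s1 n, s2 n)) l) = map s1 l.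
Proof. rewrite map_map; apply map_ext; intro; unfold p1; rewrite Cantor.cancel_of_to; reflexivity. Qed.
Lemma map_p2 (s1 s2 : nat -> nat) l : map p2 (map (fun n => Cantor.to_nat (s1 n, s2 n)) l) = map s2 l.
Proof. rewrite map_map; apply map_ext; intro; unfold p2; rewrite Cantor.cancel_of_to; reflexivity. Qed.

Section ZT.
Context {TY : Type} {TX : TY -> Type} (SYt : set TY) (OYt : set (set TY))
  (SXt : forall i, set (TX i)) (OXt : forall i, set (set (TX i))).
Hypothesis HtY : is_topology SYt OYt.
Hypothesis HtX : forall i, isolated SYt OYt i -> is_topology (SXt i) (OXt i).

Definition Comb (B : set TY) (A : forall i, set (TX i)) : set (zoomT TY TX) := fun z =>
  match z with
  | inl y => SYt y /\ ~ isolated SYt OYt y /\ B y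
  | inr s => isolated SYt OYt (projT1 s) /\ B (projT1 s) /\ SXt _ (projT2 s) /\ A _ (projT2 s)
  end.

Lemma Comb_sub B A : subset (Comb B A) (zoom_carrier SYt OYt SXt).
Proof. intros [y|[i x]]; simpl; intuition. Qed.

Lemma basis_sub B : zoom_basis SYt OYt SXt OXt B -> subset B (zoom_carrier SYt OYt SXt).
Proof.
  intros [[i [U [Hi [HU E]]]] | [U [HU E]]] z Hz.
  - apply E in Hz; destruct Hz as [x [Hx ->]]; simpl; split; auto.
    destruct (HtX i Hi) as [Hs _]; exact (Hs U HU x Hx).
  - apply E in Hz; destruct z as [y|[i x]]; simpl in *; intuition.
    destruct HtY as [Hs _]; exact (Hs U HU y H).
Qed.

Lemma Comb_closed B A : closed_in SYt OYt B ->
  (forall i, isolated SYt OYt i -> closed_in (SXt i) (OXt i) (A i)) ->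
  closed_in (zoom_carrier SYt OYt SXt) (zoom_open SYt OYt SXt OXt) (Comb B A).
Proof.
  intros [HBs HBo] HA; split; [apply Comb_sub|].
  split; [intros z [Hz _]; auto|].
  assert (HV : forall z, zoom_V SYt OYt SXt (fun t => SYt t /\ ~ B t) z ->
     zoom_carrier SYt OYt SXt z /\ ~ Comb B A z).
  { intros [y|[i x]]; simpl; intuition. }
  assert (HVb : zoom_basis SYt OYt SXt OXt (zoom_V SYt OYt SXt (fun t => SYt t /\ ~ B t))).
  { right; exists (fun t => SYt t /\ ~ B t); split; auto; intro; tauto. }
  intros [y|[i x]] [Hz Hn]; simpl in Hz, Hn.
  - exists (zoom_V SYt OYt SXt (fun t => SYt t /\ ~ B t)); split; auto; split; [|exact HV].
    simpl; intuition.
  - destruct Hz as [Hi Hx].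
    destruct (classic (B i)) as [Hb|Hb].
    + assert (Ha : ~ A i x) by (intro; apply Hn; auto).
      destruct (HA i Hi) as [_ HAo].
      exists (fun z => exists x', (fun t => SXt i t /\ ~ A i t) x' /\ z = inr (existT _ i x')).
      split; [left; exists i, (fun t => SXt i t /\ ~ A i t); split; auto; split; auto; intro; tauto|].
      split; [exists x; auto|].
      intros z [x' [[Hx' Ha'] ->]]; simpl; intuition.
    + exists (zoom_V SYt OYt SXt (fun t => SYt t /\ ~ B t)); split; auto; split; [|exact HV].
      simpl; intuition.
      destruct Hi as [Hi _]; auto.
Qed.

Lemma Comb_Fclass : forall a B A, Fclass SYt OYt a B ->
  (forall i, isolated SYt OYt i -> Fclass (SXt i) (OXt i) a (A i)) ->
  Fclass (zoom_carrier SYt OYt SXt) (zoom_open SYt OYt SXt OXt) a (Comb B A).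
Proof.
  intro a; induction (olt_wf a) as [a _ IH]; intros B A HB HA.
  destruct (classic (ozero a)) as [Hz|Hnz].
  { apply Fclass0; auto. apply Comb_closed.
    - eapply dec_zero; eauto.
    - intros i Hi; eapply dec_zero; eauto. }
  destruct (parity_tot a) as [He|Ho].
  -
    destruct (dec_even _ _ a B He Hnz HB) as [Bn [HBn EB]].
    destruct (dchoice (B := fun i => nat -> set (TX i))
      (fun i Cn => isolated SYt OYt i ->
         (forall n, exists b, olt b a /\ Fclass (SXt i) (OXt i) b (Cn n)) /\
         forall x, A i x <-> forall n, Cn n x)) as [An HAn].
    { intro i; destruct (classic (isolated SYt OYt i)) as [Hi|Hi].
      - destruct (dec_even _ _ a (A i) He Hnz (HA i Hi)) as [Cn HC]; exists Cn; auto.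
      - exists (fun _ _ => False); intro; contradiction. }
    assert (Hy0 : exists y0, cdom a y0).
    { apply NNPP; intro Hn; apply Hnz; intros x Hx; apply Hn; eauto. }
    destruct Hy0 as [y0 Hy0].
    set (condB := fun n y => cdom a y /\ exists b, ole b (ocut a y) /\ Fclass SYt OYt b (Bn n)).
    set (BB := fun n y t => (condB n y -> Bn n t) /\ (~ condB n y -> SYt t)).
    set (condA := fun i n y => cdom a y /\ exists b, ole b (ocut a y) /\ Fclass (SXt i) (OXt i) b (An i n)).
    set (AA := fun n y i x => (condA i n y -> An i n x) /\ (~ condA i n y -> SXt i x)).
    assert (HBB : forall n y c, (condB n y -> ole (ocut a y) c) -> Fclass SYt OYt c (BB n y)).
    { intros n y c Hc. destruct (classic (condB n y)) as [Hcd|Hcd].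
      - pose proof Hcd as Hcd'; destruct Hcd' as [Hy [b [Hb Hf]]].
        apply Fclass_ext with (Bn n).
        + apply Fclass_mono with b; [exact Hf| eapply ole_trans; [exact Hb| apply Hc; auto]].
        + intro t; unfold BB; split; [intro; split; auto; intro; contradiction| intros [H1 _]; apply H1; auto].
      - apply Fclass_ext with SYt.
        + apply Fclass_closed, closed_full; auto.
        + intro t; unfold BB; split; [intro; split; auto; intro; contradiction| intros [_ H1]; auto]. }
    assert (HAA : forall i n y c, isolated SYt OYt i -> (condA i n y -> ole (ocut a y) c) ->
                   Fclass (SXt i) (OXt i) c (AA n y i)).
    { intros i n y c Hi Hc. destruct (classic (condA i n y)) as [Hcd|Hcd].
      - pose proof Hcd as Hcd'; destruct Hcd' as [Hy [b [Hb Hf]]].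
        apply Fclass_ext with (An i n).
        + apply Fclass_mono with b; [exact Hf| eapply ole_trans; [exact Hb| apply Hc; auto]].
        + intro t; unfold AA; split; [intro; split; auto; intro; contradiction| intros [H1 _]; apply H1; auto].
      - apply Fclass_ext with (SXt i).
        + apply Fclass_closed, closed_full; auto.
        + intro t; unfold AA; split; [intro; split; auto; intro; contradiction| intros [_ H1]; auto]. }
    apply Fclass_even with (An := fun k => Comb (BB (fst (Cantor.of_nat k)) (snd (Cantor.of_nat k)))
                                   (fun i => AA (fst (Cantor.of_nat k)) (snd (Cantor.of_nat k)) i)); auto.
    + intro k. set (n := fst (Cantor.of_nat k)). set (y := snd (Cantor.of_nat k)).
      destruct (classic (cdom a y)) as [Hy|Hy].
      * exists (ocut a y); split; [apply ocut_olt; auto|].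
        apply IH; [apply ocut_olt; auto| |].
        -- apply HBB; intros _; apply ole_refl.
        -- intros i Hi; apply HAA; auto; intros _; apply ole_refl.
      * exists (ocut a y0); split; [apply ocut_olt; auto|].
        apply IH; [apply ocut_olt; auto| |].
        -- apply HBB; intros [H _]; contradiction.
        -- intros i Hi; apply HAA; auto; intros [H _]; contradiction.
    + intros [t|[i x]]; simpl.
      * split.
        -- intros [Ht [Hni Hb]] k; split; auto; split; auto.
           unfold BB; split; auto; intros _; apply EB; auto.
        -- intro Hk; destruct (Hk 0) as [Ht [Hni _]]; split; auto; split; auto.
           apply EB; intro n. destruct (HBn n) as [b [Hb Hf]].
           destruct (olt_cut b a Hb) as [y [Hy Hle]].
           destruct (Hk (Cantor.to_nat (n, y))) as [_ [_ [H1 _]]].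
           rewrite Cantor.cancel_of_to in H1; simpl in H1.
           apply H1; split; auto; exists b; auto.
      * split.
        -- intros [Hi [Hb [Hx Ha]]] k; split; auto; split.
           ++ unfold BB; split; auto; [intros _; apply EB; auto| intros _; destruct Hi; auto].
           ++ split; auto. unfold AA; split; auto; intros _. destruct (HAn i Hi) as [_ E]; apply E; auto.
        -- intro Hk; destruct (Hk 0) as [Hi [_ [Hx _]]]; split; auto.
           destruct (HAn i Hi) as [HAn1 EA].
           split; [|split; auto].
           ++ apply EB; intro n. destruct (HBn n) as [b [Hb Hf]].
              destruct (olt_cut b a Hb) as [y [Hy Hle]].
              destruct (Hk (Cantor.to_nat (n, y))) as [_ [[H1 _] _]].
              rewrite Cantor.cancel_of_to in H1; simpl in H1.
              apply H1; split; auto; exists b; auto.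
           ++ apply EA; intro n. destruct (HAn1 n) as [b [Hb Hf]].
              destruct (olt_cut b a Hb) as [y [Hy Hle]].
              destruct (Hk (Cantor.to_nat (n, y))) as [_ [_ [_ [H1 _]]]].
              rewrite Cantor.cancel_of_to in H1; simpl in H1.
              apply H1; split; auto; exists b; auto.
  -
    destruct Ho as [a b Hs Hb].
    destruct (dec_odd _ _ a b B Hs Hb HB) as [Bn [HBn EB]].
    destruct (dchoice (B := fun i => nat -> set (TX i))
      (fun i Cn => isolated SYt OYt i ->
         (forall n, Fclass (SXt i) (OXt i) b (Cn n)) /\
         forall x, A i x <-> exists n, Cn n x)) as [An HAn].
    { intro i; destruct (classic (isolated SYt OYt i)) as [Hi|Hi].
      - destruct (dec_odd _ _ a b (A i) Hs Hb (HA i Hi)) as [Cn HC]; exists Cn; auto.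
      - exists (fun _ _ => False); intro; contradiction. }
    apply Fclass_odd with (An := fun k => Comb (Bn (fst (Cantor.of_nat k)))
                                   (fun i => An i (snd (Cantor.of_nat k)))).
    + eapply oodd_succ; eauto.
    + intro k; exists b; split; [destruct Hs; auto|].
      apply IH; [destruct Hs; auto| apply HBn |].
      intros i Hi; apply (HAn i Hi).
    + intros [t|[i x]]; simpl.
      * split.
        -- intros [Ht [Hni Hb']]. apply EB in Hb'. destruct Hb' as [n Hn].
           exists (Cantor.to_nat (n, 0)); rewrite Cantor.cancel_of_to; simpl; auto.
        -- intros [k [Ht [Hni Hb']]]; split; auto; split; auto; apply EB; eauto.
      * split.
        -- intros [Hi [Hb' [Hx Ha]]]. apply EB in Hb'. destruct Hb' as [n Hn].
           destruct (HAn i Hi) as [_ EA]. apply EA in Ha; destruct Ha as [m Hm].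
           exists (Cantor.to_nat (n, m)); rewrite Cantor.cancel_of_to; simpl; auto.
        -- intros [k [Hi [Hb' [Hx Ha]]]]; split; auto; split; [apply EB; eauto|split; auto].
           destruct (HAn i Hi) as [_ EA]; apply EA; eauto.
Qed.

Lemma Comb_suslin B A : suslinF SYt OYt B ->
  (forall i, isolated SYt OYt i -> suslinF (SXt i) (OXt i) (A i)) ->
  suslinF (zoom_carrier SYt OYt SXt) (zoom_open SYt OYt SXt OXt) (Comb B A).
Proof.
  intros [F [HF EF]] HA.
  destruct (dchoice (B := fun i => list nat -> set (TX i))
    (fun i G => isolated SYt OYt i ->
      (forall s, s <> nil -> closed_in (SXt i) (OXt i) (G s)) /\
      forall x, A i x <-> exists sigma : nat -> nat, forall k, G (map sigma (seq 0 (Nat.succ k))) x))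
    as [G HG].
  { intro i; destruct (classic (isolated SYt OYt i)) as [Hi|Hi].
    - destruct (HA i Hi) as [G HG]; exists G; auto.
    - exists (fun _ _ => False); intro; contradiction. }
  exists (fun s => Comb (F (map p1 s)) (fun i => G i (map p2 s))); split.
  - intros s Hs; apply Comb_closed.
    + apply HF; destruct s; simpl; [contradiction| discriminate].
    + intros i Hi; apply (HG i Hi); destruct s; simpl; [contradiction| discriminate].
  - assert (M : forall (f : nat -> nat) (sg : nat -> nat) l, map f (map sg l) = map (fun n => f (sg n)) l).
    { intros; apply map_map. }
    intros [t|[i x]]; unfold Comb; cbn [projT1 projT2].
    + split.
      * intros [Ht [Hni Hb]]. apply EF in Hb; destruct Hb as [s1 Hs1].
        exists (fun n => Cantor.to_nat (s1 n, 0)); intro k; split; auto; split; auto.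
        rewrite (map_p1 s1 (fun _ => 0)); apply Hs1.
      * intros [sg Hsg]. destruct (Hsg 0) as [Ht [Hni _]]; split; auto; split; auto.
        apply EF; exists (fun n => p1 (sg n)); intro k; rewrite <- M; apply Hsg.
    + split.
      * intros [Hi [Hb [Hx Ha]]]. apply EF in Hb; destruct Hb as [s1 Hs1].
        destruct (HG i Hi) as [_ EA]; apply EA in Ha; destruct Ha as [s2 Hs2].
        exists (fun n => Cantor.to_nat (s1 n, s2 n)); intro k; split; auto; split; [|split; auto].
        -- rewrite map_p1; apply Hs1.
        -- rewrite map_p2; apply Hs2.
      * intros [sg Hsg]. destruct (Hsg 0) as [Hi [_ [Hx _]]]; split; auto; split; [|split; auto].
        -- apply EF; exists (fun n => p1 (sg n)); intro k; rewrite <- M; apply Hsg.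
        -- destruct (HG i Hi) as [_ EA]; apply EA.
           exists (fun n => p2 (sg n)); intro k; rewrite <- M; apply Hsg.
Qed.
End ZT.

Section Main.
Variables (TY : Type) (TX : TY -> Type)
  (SYt : set TY) (OYt : set (set TY)) (Y : set TY)
  (SXt : forall i, set (TX i)) (OXt : forall i, set (set (TX i)))
  (X : forall i, set (TX i)).
Hypotheses (hYt : tychonoff SYt OYt)
  (hY : dense_in SYt OYt Y)
  (hXt : forall i, isolated Y (sub_top OYt Y) i -> tychonoff (SXt i) (OXt i))
  (hX : forall i, isolated Y (sub_top OYt Y) i -> subset (X i) (SXt i))
  (hXne : forall i, isolated Y (sub_top OYt Y) i -> exists x, X i x).

Lemma topY : is_topology SYt OYt.
Proof. exact (proj1 hYt). Qed.

Lemma iso_equiv y : isolated Y (sub_top OYt Y) y <-> isolated SYt OYt y.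
Proof.
  destruct hY as [HYS Hd].
  destruct topY as [Hsub [HS [H0 [Hu Hi]]]].
  split.
  - intros [HYy [U [HU E]]].
    assert (Hy : SYt y) by auto.
    destruct (proj1 (proj2 hYt) y Hy) as [_ Hc].
    assert (HW : forall x, ~ (U x /\ (SYt x /\ ~ x = y))).
    { intros x Hx. destruct (Hd _ (Hi _ _ HU Hc) (ex_intro _ x Hx)) as [x' [[HU' [_ Hne]] HY']].
      apply Hne; apply E; auto. }
    split; auto.
    replace (fun z => z = y) with U; auto.
    apply set_ext; intro z; split.
    + intro Hz. destruct (classic (z = y)) as [E'|E']; auto.
      exfalso; apply (HW z); split; auto; split; auto; exact (Hsub U HU z Hz).
    + intro Hz; apply E; auto.
  - intros [Hs Ho].
    assert (HYy : Y y).
    { destruct (Hd _ Ho (ex_intro _ y eq_refl)) as [x [-> Hx]]; auto. }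
    split; auto. exists (fun z => z = y); split; auto.
    intro x; split; [intros ->; auto| tauto].
Qed.

Lemma iso_Y y : isolated SYt OYt y -> Y y.
Proof. intro H; apply iso_equiv in H; destruct H; auto. Qed.

Lemma topX i : isolated SYt OYt i -> is_topology (SXt i) (OXt i).
Proof. intro H; apply iso_equiv in H; exact (proj1 (hXt i H)). Qed.

Lemma subX i : isolated SYt OYt i -> subset (X i) (SXt i).
Proof. intro H; apply iso_equiv in H; auto. Qed.

Lemma YS : subset Y SYt.
Proof. destruct hY; auto. Qed.

Lemma Zs_sub : subset (zoom_carrier Y (sub_top OYt Y) X) (zoom_carrier SYt OYt SXt).
Proof.
  intros [y|[i x]]; simpl.
  - intros [HY Hn]; split; [apply YS; auto|]. intro H; apply Hn; apply iso_equiv; auto.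
  - intros [Hi Hx]; apply iso_equiv in Hi; split; auto; apply subX; auto.
Qed.

Lemma Zs_Comb : zoom_carrier Y (sub_top OYt Y) X = Comb SYt OYt SXt Y X.
Proof.
  apply set_ext; intros [y|[i x]]; simpl.
  - rewrite iso_equiv; split.
    + intros [HY Hn]; split; [apply YS; auto|split; auto].
    + intros [_ [Hn HY]]; split; auto.
  - rewrite iso_equiv; split.
    + intros [Hi Hx]; split; auto; split; [apply iso_Y; auto|split; auto].
      apply subX; auto.
    + intros [Hi [_ [_ Hx]]]; auto.
Qed.

Lemma Zs_open W : zoom_open Y (sub_top OYt Y) X (fun i => sub_top (OXt i) (X i)) W <->
  sub_top (zoom_open SYt OYt SXt OXt) (zoom_carrier Y (sub_top OYt Y) X) W.
Proof.
  split.
  - intros [HWs HWb].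
    exists (fun z => exists B, zoom_basis SYt OYt SXt OXt B /\ B z /\
              forall z', B z' -> zoom_carrier Y (sub_top OYt Y) X z' -> W z').
    split.
    + split.
      * intros z [B [HB [Hz _]]]; eapply basis_sub; eauto. apply topY. apply topX.
      * intros z [B [HB [Hz HBW]]]; exists B; split; auto; split; auto.
        intros z' Hz'; exists B; auto.
    + intro z; split.
      * intro Hz; split; [apply HWs; auto|].
        destruct (HWb z Hz) as [B0 [HB0 [Hz0 HB0W]]].
        destruct HB0 as [[i [U [Hi [HU E]]]] | [U [HU E]]].
        -- destruct HU as [Ut [HUt EU]].
           assert (Hi' : isolated SYt OYt i) by (apply iso_equiv; auto).
           exists (fun z => exists x, Ut x /\ z = inr (existT _ i x)); split; [|split].
           ++ left; exists i, Ut; split; auto; split; auto; intro; tauto.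
           ++ apply E in Hz0; destruct Hz0 as [x [Hx ->]]; exists x; split; auto.
              apply EU in Hx; tauto.
           ++ intros z' [x [Hx ->]] Hz'. apply HB0W. apply E. exists x; split; auto.
              apply EU; split; auto. simpl in Hz'; tauto.
        -- destruct HU as [Ut [HUt EU]].
           exists (zoom_V SYt OYt SXt Ut); split; [right; exists Ut; split; auto; intro; tauto|split].
           ++ apply E in Hz0. destruct z as [y|[i x]]; simpl in *.
              ** destruct Hz0 as [HU Hn]; apply EU in HU; split; [tauto|].
                 intro H; apply Hn; apply iso_equiv; auto.
              ** destruct Hz0 as [HU [Hi Hx]]; apply EU in HU.
                 split; [tauto|]. rewrite <- iso_equiv; split; auto.
                 apply hX; auto.
           ++ intros z' Hz' HZ'. apply HB0W; apply E.
              destruct z' as [y|[i x]]; simpl in *.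
              ** destruct Hz' as [HU Hn]; destruct HZ' as [HY Hn']; split; auto.
                 apply EU; auto.
              ** destruct Hz' as [HU [Hi Hx]]; destruct HZ' as [Hi' Hx']; split; auto.
                 apply EU; split; auto; apply iso_Y; auto.
      * intros [Hz [B [HB [HzB HBW]]]]; auto.
  - intros [Wt [[HWts HWtb] E]].
    split; [intros z Hz; apply E in Hz; tauto|].
    intros z Hz. apply E in Hz as Hz'. destruct Hz' as [HZ HWt].
    destruct (HWtb z HWt) as [B [HB [HzB HBW]]].
    destruct HB as [[i [U [Hi [HU EB]]]] | [U [HU EB]]].
    + apply EB in HzB as [x0 [Hx0 ->]].
      simpl in HZ; destruct HZ as [HiY HX0].
      exists (fun z => exists x, (fun t => X i t /\ U t) x /\ z = inr (existT _ i x)); split; [|split].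
      * left; exists i, (fun t => X i t /\ U t); split; auto; split; [|intro; tauto].
        exists U; split; auto; intro; tauto.
      * exists x0; auto.
      * intros z [x [[Hx HUx] ->]]. apply E; split; [simpl; auto|].
        apply HBW; apply EB; exists x; auto.
    + exists (zoom_V Y (sub_top OYt Y) X (fun t => Y t /\ U t)); split; [|split].
      * right; exists (fun t => Y t /\ U t); split; [exists U; split; auto; intro; tauto| intro; tauto].
      * apply EB in HzB. destruct z as [y|[i x]]; simpl in *.
        -- destruct HZ as [HY Hn]; destruct HzB as [HU' _]; split; [split|]; auto.
        -- destruct HZ as [Hi' Hx]; destruct HzB as [HU' _]; split; [split|split]; auto.
           destruct Hi'; auto.
      * intros z' Hz'. apply E.
        assert (HZ' : zoom_carrier Y (sub_top OYt Y) X z').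
        { destruct z' as [y|[i x]]; simpl in *; tauto. }
        split; auto. apply HBW; apply EB.
        destruct z' as [y|[i x]]; simpl in *.
        -- destruct Hz' as [[HY HU'] Hn]; split; auto. intro H; apply Hn; apply iso_equiv; auto.
        -- destruct Hz' as [[HY HU'] [Hi Hx]]; split; auto; split; [apply iso_equiv; auto|].
           apply hX; auto.
Qed.

Definition e (y : TY) : zoomT TY TX :=
  match excluded_middle_informative (exists x, isolated SYt OYt y /\ X y x) with
  | left H => inr (existT _ y (proj1_sig (constructive_indefinite_description _ H)))
  | right _ => inl y
  end.

Lemma e_iso y : isolated SYt OYt y -> exists x, e y = inr (existT _ y x) /\ X y x.
Proof.
  intro Hi; unfold e; destruct excluded_middle_informative as [H|H].
  - set (sg := constructive_indefinite_description _ H).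
    exists (proj1_sig sg); split; auto. exact (proj2 (proj2_sig sg)).
  - exfalso; apply H. apply iso_equiv in Hi as Hi'. destruct (hXne y Hi') as [x Hx]; eauto.
Qed.

Lemma e_niso y : ~ isolated SYt OYt y -> e y = inl y.
Proof.
  intro Hi; unfold e; destruct excluded_middle_informative as [H|H]; auto.
  exfalso; destruct H as [x [H _]]; auto.
Qed.

Lemma e_map y : SYt y -> zoom_carrier SYt OYt SXt (e y).
Proof.
  intro Hy; destruct (classic (isolated SYt OYt y)) as [Hi|Hi].
  - destruct (e_iso y Hi) as [x [-> Hx]]; simpl; split; auto; apply subX; auto.
  - rewrite e_niso; simpl; auto.
Qed.

Lemma e_cont U : zoom_open SYt OYt SXt OXt U -> OYt (fun y => SYt y /\ U (e y)).
Proof.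
  intros [HUs HUb]. apply (open_local SYt); [apply topY| intros y [Hy _]; auto|].
  intros y [Hy HU].
  destruct (classic (isolated SYt OYt y)) as [Hi|Hi].
  - exists (fun z => z = y); split; [destruct Hi; auto|split; auto].
    intros z ->; auto.
  - rewrite e_niso in HU; auto.
    destruct (HUb _ HU) as [B [HB [HzB HBU]]].
    destruct HB as [[i [V [_ [_ EB]]]] | [V [HV EB]]].
    + apply EB in HzB; destruct HzB as [x [_ Habs]]; discriminate.
    + apply EB in HzB; simpl in HzB; destruct HzB as [HVy _].
      exists V; split; auto; split; auto.
      intros u Hu. assert (HuS : SYt u) by (destruct topY as [Hs _]; exact (Hs V HV u Hu)).
      split; auto. apply HBU; apply EB.
      destruct (classic (isolated SYt OYt u)) as [Hiu|Hiu].
      * destruct (e_iso u Hiu) as [x [-> Hx]]; simpl; split; auto; split; auto; apply subX; auto.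
      * rewrite e_niso; simpl; auto.
Qed.

Lemma Y_pre : Y = preim SYt e (zoom_carrier Y (sub_top OYt Y) X).
Proof.
  apply set_ext; intro y; unfold preim; split.
  - intro HY; split; [apply YS; auto|].
    destruct (classic (isolated SYt OYt y)) as [Hi|Hi].
    + destruct (e_iso y Hi) as [x [-> Hx]]; simpl; split; auto; apply iso_equiv; auto.
    + rewrite e_niso; simpl; auto; split; auto; rewrite iso_equiv; auto.
  - intros [Hy Hz].
    destruct (classic (isolated SYt OYt y)) as [Hi|Hi].
    + apply iso_Y; auto.
    + rewrite e_niso in Hz; simpl in Hz; tauto.
Qed.

Lemma io_map i x : isolated SYt OYt i -> SXt i x ->
  zoom_carrier SYt OYt SXt (inr (existT TX i x)).
Proof. simpl; auto. Qed.

Lemma io_cont i U : isolated SYt OYt i -> zoom_open SYt OYt SXt OXt U ->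
  OXt i (fun x => SXt i x /\ U (inr (existT TX i x))).
Proof.
  intros Hi [HUs HUb]. apply (open_local (SXt i)); [apply topX; auto| intros x [Hx _]; auto|].
  intros x [Hx HU].
  destruct (HUb _ HU) as [B [HB [HzB HBU]]].
  destruct HB as [[i' [V [Hi' [HV EB]]]] | [V [HV EB]]].
  - apply EB in HzB as HzB'; destruct HzB' as [x' [Hx' Heq]].
    assert (Heq2 : existT TX i x = existT TX i' x') by (injection Heq; auto).
    assert (Ei : i = i') by exact (f_equal (@projT1 _ _) Heq2). subst i'.
    apply Eqdep.EqdepTheory.inj_pair2 in Heq2. subst x'.
    exists V; split; auto; split; auto.
    intros u Hu; split; [destruct (topX i Hi) as [Hs _]; exact (Hs V HV u Hu)|].
    apply HBU; apply EB; exists u; auto.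
  - exists (SXt i); split; [destruct (topX i Hi) as [_ [Hs _]]; auto| split; auto].
    intros u Hu; split; auto. apply HBU; apply EB.
    apply EB in HzB; simpl in *; tauto.
Qed.

Lemma X_pre i : isolated SYt OYt i ->
  X i = preim (SXt i) (fun x => inr (existT TX i x)) (zoom_carrier Y (sub_top OYt Y) X).
Proof.
  intro Hi; apply set_ext; intro x; unfold preim; simpl; split.
  - intro Hx; split; [apply subX; auto| split; auto; apply iso_equiv; auto].
  - tauto.
Qed.
End Main.
Local Close Scope nat_scope.
Theorem proposition4p3
  (TY : Type) (TX : TY -> Type)
  (SYt : set TY) (OYt : set (set TY))            (* the space Y~ *)
  (Y : set TY)                                   (* Y, a dense subspace of Y~ *)
  (SXt : forall i, set (TX i)) (OXt : forall i, set (set (TX i))) (* X~_i *)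
  (X : forall i, set (TX i))                     (* X_i, a subspace of X~_i *)
  (hYt : tychonoff SYt OYt)
  (hY : dense_in SYt OYt Y)
  (hXt : forall i, isolated Y (sub_top OYt Y) i -> tychonoff (SXt i) (OXt i))
  (hX : forall i, isolated Y (sub_top OYt Y) i -> subset (X i) (SXt i))
  (hXne : forall i, isolated Y (sub_top OYt Y) i -> exists x, X i x) :
  let OY := sub_top OYt Y in
  let OX := fun i => sub_top (OXt i) (X i) in
  let Zs := zoom_carrier Y OY X in
  let Zt := zoom_carrier SYt OYt SXt in
  let OZt := zoom_open SYt OYt SXt OXt in
  (* Z(Y,X) is a subspace of Z(Y~,X~) *)
  (subset Zs Zt /\
   forall W, zoom_open Y OY X OX W <-> sub_top OZt Zs W) /\
  (* one side is defined iff the other is *)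
  (compl_defined Zt OZt Zs <->
     (compl_defined SYt OYt Y /\
      forall i, isolated Y OY i -> compl_defined (SXt i) (OXt i) (X i))) /\
  (* the equality Compl(Z,Z~) = max{Compl(Y,Y~), sup_i Compl(X_i,X~_i)} *)
  (forall (c cY : ordw1) (cX : TY -> ordw1),
     is_compl Zt OZt Zs c ->
     is_compl SYt OYt Y cY ->
     (forall i, isolated Y OY i -> is_compl (SXt i) (OXt i) (X i) (cX i)) ->
     ole1 cY c /\ (forall i, isolated Y OY i -> ole1 (cX i) c) /\
     (forall d, ole1 cY d -> (forall i, isolated Y OY i -> ole1 (cX i) d) ->
        ole1 c d)).

Proof.
  intros OY OX Zs Zt OZt.
  assert (HtY : is_topology SYt OYt) by exact (proj1 hYt).
  assert (HtX : forall i, isolated SYt OYt i -> is_topology (SXt i) (OXt i))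
    by (intros; eapply topX; eauto).
  assert (HisoE : forall y, isolated Y (sub_top OYt Y) y <-> isolated SYt OYt y)
    by (intro; eapply iso_equiv; eauto).
  set (e0 := e TY TX SYt OYt X).
  assert (Hpe : forall y, SYt y -> Zt (e0 y)) by (intros; eapply e_map; eauto).
  assert (Hce : forall U, OZt U -> OYt (fun y => SYt y /\ U (e0 y)))
    by (intros; eapply e_cont; eauto).
  assert (HYp : Y = preim SYt e0 Zs) by (eapply Y_pre; eauto).
  assert (Hci : forall i U, isolated SYt OYt i -> OZt U ->
     OXt i (fun x => SXt i x /\ U (inr (existT TX i x)))) by (intros; eapply io_cont; eauto).
  assert (HXp : forall i, isolated SYt OYt i -> X i = preim (SXt i) (fun x => inr (existT TX i x)) Zs)
    by (intros; eapply X_pre; eauto).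
  assert (HZC : Zs = Comb SYt OYt SXt Y X) by (eapply Zs_Comb; eauto).
  assert (Hio : forall i x, isolated SYt OYt i -> SXt i x -> Zt (inr (existT TX i x)))
    by (intros; eapply io_map; eauto).
  split; [split; [eapply Zs_sub; eauto| intro W; eapply Zs_open; eauto]|].
  split.
  - split.
    + intro HZ; split.
      * unfold compl_defined, Fw. rewrite HYp. eapply suslin_pre; eauto.
      * intros i Hi. apply HisoE in Hi. unfold compl_defined, Fw. rewrite (HXp i Hi).
        eapply suslin_pre; eauto. intros x Hx; apply Hio; auto.
    + intros [HY HX]. unfold compl_defined, Fw. rewrite HZC.
      apply Comb_suslin. exact HY.
      intros i Hi. apply HX. apply HisoE; auto.
  - intros c cY cX Hc HcY HcX. split; [|split].
    + apply (proj2 HcY). rewrite HYp. eapply Fw_pre; eauto. exact (proj1 Hc).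
    + intros i Hi. apply (proj2 (HcX i Hi)). apply HisoE in Hi. rewrite (HXp i Hi).
      eapply Fw_pre; [ | |exact (proj1 Hc)]. intros x Hx; apply Hio; auto. auto.
    + intros d HdY HdX. destruct d as [d|]; [|destruct c; simpl; auto].
      apply (proj2 Hc). simpl. rewrite HZC.
      apply Comb_Fclass; auto.
      * destruct cY as [cy|]; [|contradiction].
        apply Fclass_mono with cy; auto. exact (proj1 HcY).
      * intros i Hi. apply HisoE in Hi. specialize (HdX i Hi). specialize (HcX i Hi).
        destruct (cX i) as [cx|]; [|contradiction].
        apply Fclass_mono with cx; auto. exact (proj1 HcX).
Qed.
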